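(* For an integer $x\ge3$ and an odd prime $p$, the following are equivalent: (1) $p$ divides $x$; (2) $\mathcal{F}_{\{1,x\}}\subseteq\mathcal{F}_{\{1,p,2p\}}$ and $\mathcal{F}_{\{2,x\}}\subseteq\mathcal{F}_{\{2,p,2p\}}$.
   Context: $\mathbb{N}=\{1,2,\dots\}$, $\mathbb{N}_0=\{0\}\cup\mathbb{N}$. The Kirch topology $\tau_K$ on $\mathbb{N}$ is generated by the base of all $a+b\mathbb{N}_0=\{a+bn:n\in\mathbb{N}_0\}$ with $a,b\in\mathbb{N}$ coprime and $b$ square-free. Closures $\overline{U}$ are in $\tau_K$; $\tau_y=\{U\in\tau_K:y\in U\}$. For finite $E\subseteq\mathbb{N}$, $\mathcal{F}_E=\{B\subseteq\mathbb{N}:\exists (U_y)_{y\in E}\in\prod_{y\in E}\tau_y\ (\bigcap_{y\in E}\overline{U_y}\subseteq B)\}$. *)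

(* Defs.v *)
(* Natural numbers: N = {1,2,...} is modelled as
   the positive elements of [nat]; subsets of N are predicates [nat -> Prop]
   that hold only on positive numbers. *)
From mathcomp Require Import all_boot.
Set Implicit Arguments. Unset Strict Implicit. Unset Printing Implicit Defensive.

Definition squarefree (b : nat) : Prop := forall d, 1 < d -> ~ (d * d %| b).

Definition aprog (a b : nat) : nat -> Prop := fun n => exists k, n = a + b * k.

Definition kirch_basic (a b : nat) : Prop :=
  0 < a /\ 0 < b /\ coprime a b /\ squarefree b.

Definition kirch_open (U : nat -> Prop) : Prop :=
  (forall n, U n -> 0 < n) /\
  (forall n, U n -> exists a b, kirch_basic a b /\ aprog a b n /\
                               (forall m, aprog a b m -> U m)).

Definition kclosure (U : nat -> Prop) : nat -> Prop :=
  fun n => 0 < n /\ forall V, kirch_open V -> V n -> exists m, V m /\ U m.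

Definition tau (y : nat) (U : nat -> Prop) : Prop := kirch_open U /\ U y.

Definition FE (E : seq nat) (B : nat -> Prop) : Prop :=
  (forall n, B n -> 0 < n) /\
  exists U : nat -> (nat -> Prop),
    (forall y, y \in E -> tau y (U y)) /\
    (forall n, (0 < n /\ forall y, y \in E -> kclosure (U y) n) -> B n).

Definition FE_sub (E1 E2 : seq nat) : Prop := forall B, FE E1 B -> FE E2 B.

(* Main.v *)
Require Import Defs.
From mathcomp Require Import all_boot zify.
Set Implicit Arguments. Unset Strict Implicit.

Lemma aprogP a d m : aprog a d m <-> a <= m /\ m = a %[mod d].
Proof.
split.
- move=> [k ->]; split; first by rewrite leq_addr.
  by rewrite addnC mulnC modnMDl.
- move=> [am /eqP]; rewrite eqn_mod_dvd // => /dvdnP [k hk].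
  exists k; rewrite mulnC -hk; lia.
Qed.

Lemma sqf_dvd a b : squarefree b -> a %| b -> squarefree a.
Proof. by move=> sb ab d d1 dd; apply: (sb d d1); apply: dvdn_trans ab. Qed.

Lemma sqf1 : squarefree 1.
Proof. by move=> d d1; rewrite dvdn1 => /eqP; nia. Qed.

Lemma sqf_prime p : prime p -> squarefree p.
Proof.
move=> pp d d1 dd.
have dp : d %| p by apply: dvdn_trans dd; apply: dvdn_mulr.
have := prime_gt1 pp.
case/primeP: pp => p1 H.
case/orP: (H d dp) => /eqP E; first lia.
subst d. have := dvdn_leq (ltnW p1) dd. nia.
Qed.

Lemma crt2 d b n z K : 0 < d -> 0 < b -> squarefree d -> n = z %[mod gcdn d b] ->
  exists m, K <= m /\ m = n %[mod d] /\ m = z %[mod b].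
Proof.
move=> d0 b0 sd e.
set g := gcdn d b.
have g0 : 0 < g by rewrite gcdn_gt0 d0.
have gd : g %| d := dvdn_gcdl d b.
have gb : g %| b := dvdn_gcdr d b.
set d' := d %/ g.
have dd' : d = d' * g by rewrite divnK.
have d'0 : 0 < d' by move: d0; rewrite dd' muln_gt0 => /andP[].
have cop : coprime d' b.
  rewrite /coprime; set h := gcdn d' b.
  have h0 : 0 < h by rewrite gcdn_gt0 d'0.
  have hd' : h %| d' := dvdn_gcdl _ _.
  have hb : h %| b := dvdn_gcdr _ _.
  have hd : h %| d by rewrite dd'; apply: dvdn_mulr.
  have hg : h %| g by rewrite dvdn_gcd hd hb.
  have hh : h * h %| d by rewrite dd'; apply: dvdn_mul.
  case: (ltnP 1 h) => h1; first by case: (sd h h1 hh).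
  apply/eqP; lia.
have copg : coprime d' g := coprime_dvdr gb cop.
set m0 := chinese d' b n z.
have m1 : m0 = n %[mod d'] := chinese_modl cop _ _.
have m2 : m0 = z %[mod b] := chinese_modr cop _ _.
have m3 : m0 = n %[mod g].
  by rewrite -(modn_dvdm _ gb) m2 (modn_dvdm _ gb) e.
have m4 : m0 = n %[mod d].
  apply/eqP; rewrite dd' chinese_remainder // m1 m3 !eqxx //.
exists (m0 + K * (d * b)); split.
  apply: leq_trans (leq_addl m0 _); rewrite leq_pmulr // muln_gt0 d0 b0 //.
split.
- by rewrite (mulnC d b) mulnA addnC modnMDl.
- by rewrite mulnA addnC modnMDl.
Qed.


Lemma kopen_prog z b : 0 < z -> 0 < b -> coprime z b -> squarefree b ->
  kirch_open (aprog z b).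
Proof.
move=> z0 b0 cz sb; split.
- by move=> n [k ->]; rewrite addn_gt0 z0.
- move=> n hn; exists z, b; split; first by [].
  by split.
Qed.

Lemma kopen_pos : kirch_open (fun n => 0 < n).
Proof.
split; first by [].
move=> n n0; exists 1, 1; split; first by split=> //; split=> //; split; [exact: coprime1n| exact: sqf1].
split; first by exists n.-1; lia.
by move=> m [k ->].
Qed.

Lemma nbhd_basic U y : kirch_open U -> U y ->
  exists b, 0 < b /\ coprime y b /\ squarefree b /\ (forall m, aprog y b m -> U m).
Proof.
move=> [_ hU] Uy; have [a [b [[a0 [b0 [cab sb]]] [[k hk] sub]]]] := hU y Uy.
exists b; split=> //; split.
  by rewrite -coprime_modl hk addnC mulnC modnMDl coprime_modl.
split=> // m [j ->]; apply: sub; exists (k + j); rewrite hk; lia.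
Qed.

Lemma in_cl U z b n : 0 < n -> 0 < b -> (forall m, aprog z b m -> U m) ->
  (forall d, 0 < d -> squarefree d -> coprime n d -> n = z %[mod gcdn d b]) ->
  kclosure U n.
Proof.
move=> n0 b0 sub H; split=> // V [_ hV] Vn.
have [a [d [[a0 [d0 [cad sd]]] [[k hk] subV]]]] := hV n Vn.
have cnd : coprime n d by rewrite -coprime_modl hk addnC mulnC modnMDl coprime_modl.
have [m [Km [m1 m2]]] := crt2 (n + z) d0 b0 sd (H d d0 sd cnd).
exists m; split.
- apply: subV; apply/aprogP; split; first by lia.
  by rewrite m1 hk addnC mulnC modnMDl.
- apply: sub; apply/aprogP; split; first by lia.
  exact: m2.
Qed.

Lemma cl_cong z b n d : kclosure (aprog z b) n -> 0 < d -> squarefree d ->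
  coprime n d -> n = z %[mod gcdn d b].
Proof.
move=> [n0 H] d0 sd cnd.
have [m [[k hk] hm]] := H _ (kopen_prog n0 d0 cnd sd) (ex_intro _ 0 (esym (etrans (congr1 (addn n) (muln0 d)) (addn0 n)))).
have gd : gcdn d b %| d := dvdn_gcdl d b.
have gb : gcdn d b %| b := dvdn_gcdr d b.
move/aprogP: hm => [_ hm].
rewrite -(modn_dvdm _ gd) -(modn_dvdm z gb) -hm (modn_dvdm _ gb) -(modn_dvdm m gd).
by rewrite hk addnC mulnC modnMDl.
Qed.

Lemma odd_part b : squarefree b -> exists b' e, b = b' * e /\ e %| 2 /\ odd b'.
Proof.
move=> sb; case ob: (odd b); first by exists b, 1; rewrite muln1.
exists b./2, 2; split.
  by have := odd_double_half b; rewrite ob add0n -muln2.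
split=> //; case ob': (odd b./2) => //.
exfalso; apply: (sb 2 isT).
have := odd_double_half b; have := odd_double_half b./2; rewrite ob ob' !add0n.
move=> e1 e2; rewrite -e2 -e1 -!muln2 -mulnA; exact: dvdn_mull.
Qed.

Lemma mem3 (y c p q : nat) : y \in [:: c; p; q] -> y = c \/ y = p \/ y = q.
Proof. by rewrite !inE => /or3P [/eqP|/eqP|/eqP]; auto. Qed.

Lemma mem2 (y c p : nat) : y \in [:: c; p] -> y = c \/ y = p.
Proof. by rewrite !inE => /orP [/eqP|/eqP]; auto. Qed.

Lemma le2_cases k : 0 < k -> k <= 2 -> k = 1 \/ k = 2.
Proof. by case: k => [|[|[|k]]] //; auto. Qed.

Lemma fwd c x p : 0 < c -> c < p -> prime p -> p %| x -> 0 < x ->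
  FE_sub [:: c; x] [:: c; p; 2 * p].
Proof.
move=> c0 cp pp px x0 B [Bpos [U [hU hcap]]]; split=> //.
have p0 := prime_gt0 pp.
have [hUx Ux] : tau x (U x) by apply: hU; rewrite !inE eqxx orbT.
have [b [b0 [cxb [sb subb]]]] := nbhd_basic hUx Ux.
have [b' [e [be [ee2 ob']]]] := odd_part sb.
have b'b : b' %| b by rewrite be dvdn_mulr.
have b'0 : 0 < b' by move: b0; rewrite be muln_gt0 => /andP[].
have cpb : coprime p b := coprime_dvdl px cxb.
have cpb' : coprime p b' := coprime_dvdr b'b cpb.
have c2pb' : coprime (2 * p) b' by rewrite coprimeMl coprime2n ob' cpb'.
have sb' : squarefree b' := sqf_dvd sb b'b.
have cnp : (c == p) = false by apply/negbTE; rewrite neq_ltn cp.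
have cn2p : (c == 2 * p) = false by apply/negbTE; rewrite neq_ltn; apply/orP; left; lia.
have pn2p : (p == 2 * p) = false by apply/negbTE; rewrite neq_ltn; apply/orP; left; lia.
pose V y := if y == p then aprog p b else if y == 2 * p then aprog (2 * p) b' else U y.
exists V; split.
- move=> y /mem3 [->|[->|->]].
  + by rewrite /V cnp cn2p; apply: hU; rewrite inE eqxx.
  + rewrite /V eqxx; split; first exact: kopen_prog.
    by exists 0; rewrite muln0 addn0.
  + rewrite /V eqn_pmul2r // eqxx.
    have -> : (2 * p == p) = false by rewrite eq_sym.
    split; first by apply: kopen_prog => //; rewrite muln_gt0 p0.
    by exists 0; rewrite muln0 addn0.
- move=> n [n0 hn]; apply: hcap; split=> //.
  move=> y /mem2 [->|->].
  + by have := hn c; rewrite inE eqxx => /(_ isT); rewrite /V cnp cn2p.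
  + have hp : kclosure (aprog p b) n by have := hn p; rewrite !inE eqxx orbT => /(_ isT); rewrite /V eqxx.
    have h2 : kclosure (aprog (2 * p) b') n.
      have := hn (2 * p); rewrite !inE eqxx !orbT => /(_ isT); rewrite /V eq_sym pn2p eqxx //.
    apply: (in_cl n0 b0 subb) => d d0 sd cnd.
    have e1 := cl_cong hp d0 sd cnd.
    have e2 := cl_cong h2 d0 sd cnd.
    set g := gcdn d b in e1 *.
    set h := gcdn d b' in e2.
    have hg : h %| g by rewrite dvdn_gcd dvdn_gcdl /= (dvdn_trans (dvdn_gcdr _ _) b'b).
    have e3 : 2 * p = p %[mod h] by rewrite -e2 -(modn_dvdm n hg) e1 (modn_dvdm p hg).
    have hp' : h %| p.
      move/eqP: e3; rewrite eqn_mod_dvd; last by rewrite mul2n -addnn leq_addr.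
      by rewrite mul2n -addnn addnK.
    have hb : h %| b := dvdn_trans (dvdn_gcdr _ _) b'b.
    have h1 : h = 1 by apply/eqP; rewrite -dvdn1 -(eqP cpb) dvdn_gcd hp' hb.
    have cgb' : coprime g b'.
      rewrite /coprime -dvdn1 -h1 dvdn_gcd (dvdn_trans (dvdn_gcdl _ _) (dvdn_gcdl _ _)) dvdn_gcdr //.
    have g2 : g %| 2.
      apply: dvdn_trans ee2; rewrite -(Gauss_dvdr _ cgb') -be; exact: dvdn_gcdr.
    have g0 : 0 < g by rewrite gcdn_gt0 d0.
    have gle := dvdn_leq (isT : 0 < 2) g2.
    have [->|g2'] : g = 1 \/ g = 2 by apply: le2_cases.
      by rewrite !modn1.
    have on : odd n.
      by rewrite -coprimen2; apply: coprime_dvdr cnd; rewrite -g2' dvdn_gcdl.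
    have ox : odd x.
      by rewrite -coprimen2; apply: coprime_dvdr cxb; rewrite -g2' dvdn_gcdr.
    by rewrite g2' !modn2 on ox.
Qed.

Lemma bwd c x p : 0 < c -> c < p -> prime p -> ~~ (p %| x) -> x %% p != c %% p ->
  ~ FE_sub [:: c; x] [:: c; p; 2 * p].
Proof.
move=> c0 cp pp npx nxc hsub.
have p0 := prime_gt0 pp.
have x0 : 0 < x by move: npx; case: (x) => //; rewrite dvdn0.
have cx : (c == x) = false by apply/negbTE; apply: contra nxc => /eqP ->.
have cxp : coprime x p by rewrite coprime_sym prime_coprime.
pose U y := if y == x then aprog x p else (fun n => 0 < n).
pose B n := 0 < n /\ forall y, y \in [:: c; x] -> kclosure (U y) n.
have FB : FE [:: c; x] B.
  split; first by move=> n [].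
  exists U; split=> // y /mem2 [->|->].
  + rewrite /U cx; split; [exact: kopen_pos | exact: c0].
  + rewrite /U eqxx; split; first exact: kopen_prog (sqf_prime pp).
    by exists 0; rewrite muln0 addn0.
have [_ [V [hV hcap]]] := hsub B FB.
have [hVc Vc] : tau c (V c) by apply: hV; rewrite inE eqxx.
have [hVp Vp] : tau p (V p) by apply: hV; rewrite !inE eqxx orbT.
have [hV2 V2] : tau (2 * p) (V (2 * p)) by apply: hV; rewrite !inE eqxx !orbT.
have [bc [bc0 [ccb [sbc subc]]]] := nbhd_basic hVc Vc.
have [bp [bp0 [cpb [sbp subp]]]] := nbhd_basic hVp Vp.
have [b2 [b20 [c2b [sb2 sub2]]]] := nbhd_basic hV2 V2.
have [bc' [e [bce [ep [cbc'p ebc]]]]] : exists bc' e, bc = bc' * e /\ e %| p /\ coprime bc' p /\ bc' %| bc.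
  case pbc: (p %| bc).
  - exists (bc %/ p), p; rewrite divnK //; split=> //; split=> //; split; last first.
      by apply/dvdnP; exists p; rewrite mulnC divnK.
    rewrite coprime_sym prime_coprime //; apply/negP => /dvdnP [k hk].
    apply: (sbc p (prime_gt1 pp)); apply/dvdnP; exists k.
    by rewrite mulnA -hk divnK.
  - exists bc, 1; rewrite muln1; split=> //; split; first exact: dvd1n.
    by rewrite coprime_sym prime_coprime // pbc.
set M := bc' * bp * b2.
have cMp : coprime M p.
  rewrite !coprimeMl cbc'p coprime_sym cpb /=.
  by rewrite coprime_sym; apply: coprime_dvdl c2b; rewrite dvdn_mull.
set n := chinese M p 0 c.
have nM : n = 0 %[mod M] := chinese_modl cMp _ _.
have np : n = c %[mod p] := chinese_modr cMp _ _.
have Mn : M %| n by rewrite /dvdn nM mod0n.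
have cmodp : c %% p = c by rewrite modn_small.
have n0 : 0 < n.
  case: (posnP n) np => // ->; rewrite mod0n cmodp => c0'.
  by move: c0; rewrite -c0'.
have coprime_ok : forall d q, d %| n -> coprime n q -> coprime d q.
  by move=> d q dn; apply: coprime_dvdl.
have triv : forall b0 z d, b0 %| M -> coprime n d -> n = z %[mod gcdn d b0].
  move=> b0' z d bM cnd.
  have g1 : gcdn d b0' = 1.
    apply/eqP; rewrite -dvdn1 -(eqP cnd) dvdn_gcd dvdn_gcdl andbT.
    exact: dvdn_trans (dvdn_gcdr _ _) (dvdn_trans bM Mn).
  by rewrite g1 !modn1.
have Bn : B n.
  apply: hcap; split=> // y /mem3 [->|[->|->]].
  - apply: (in_cl n0 bc0 subc) => d d0 sd cnd.
    set g := gcdn d bc.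
    have cgbc' : coprime g bc'.
      rewrite coprime_sym; apply: coprime_dvdl (dvdn_trans _ Mn) _.
        by rewrite /M -mulnA dvdn_mulr.
      by rewrite coprime_sym; apply: coprime_dvdl (dvdn_gcdl d bc) _; rewrite coprime_sym.
    have gp : g %| p.
      apply: dvdn_trans ep; rewrite -(Gauss_dvdr _ cgbc') -bce; exact: dvdn_gcdr.
    by rewrite -(modn_dvdm n gp) np (modn_dvdm c gp).
  - apply: (in_cl n0 bp0 subp) => d d0 sd cnd; apply: triv cnd.
    by rewrite /M dvdn_mulr // dvdn_mull.
  - apply: (in_cl n0 b20 sub2) => d d0 sd cnd; apply: triv cnd.
    by rewrite /M dvdn_mull.
have [_ hB] := Bn.
have := hB x; rewrite !inE eqxx orbT => /(_ isT); rewrite /U eqxx => clx.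
have cnp : coprime n p.
  by rewrite -coprime_modl np cmodp coprime_sym prime_coprime // gtnNdvd.
have := cl_cong clx p0 (sqf_prime pp) cnp; rewrite gcdnn np => /eqP.
by rewrite eq_sym (negbTE nxc).
Qed.

Unset Implicit Arguments.
Set Strict Implicit.

Theorem lemma3p15 (x p : nat) (hx : 3 <= x) (hp : prime p) (hodd : odd p) :
  p %| x <->
  (FE_sub [:: 1; x] [:: 1; p; 2 * p] /\ FE_sub [:: 2; x] [:: 2; p; 2 * p]).
Proof.
have x0 : 0 < x by apply: leq_trans hx.
have p3 : 2 < p.
  have := prime_gt1 hp; case: p hp hodd => [|[|[|q]]] //.
split.
- move=> px; split; apply: fwd => //; exact: leq_ltn_trans p3.
- move=> [h1 h2]; case: (boolP (p %| x)) => // npx; exfalso.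
  case e1: (x %% p == 1 %% p).
  + apply: (bwd (c := 2) _ _ hp npx _ h2) => //.
    rewrite (eqP e1) !modn_small //; exact: ltnW.
  + apply: (bwd (c := 1) _ _ hp npx _ h1) => //; first exact: ltnW.
    by rewrite e1.
Qed.
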